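(* Let $e\ge2$ and let $p^r$, $q^s$ be prime powers with $p^r\equiv 1\pmod e$ and $q^s\equiv1\pmod e$ (the cases $p\ne q$ and $p=q$ are both allowed). Let $\eta_r:\mathbb{Z}/e\mathbb{Z}\to\mathbb{C}$ be the Gaussian periods of degree $e$ for $\mathbb{F}_{p^r}$ (with respect to a fixed generator of $\mathbb{F}_{p^r}^\times$) and $\eta'_s$ those for $\mathbb{F}_{q^s}$ (with respect to a fixed generator of $\mathbb{F}_{q^s}^\times$), and let $C$, $C'$ be the corresponding multiplication matrices. Then for every $d\in(\mathbb{Z}/e\mathbb{Z})\setminus\{0\}$ and all $i,j\in\mathbb{Z}/e\mathbb{Z}$, \[ (\eta_r\overset{d}{\ast}\eta'_s)(i)\,(\eta_r\overset{d}{\ast}\eta'_s)(j)=\sum_{k=0}^{e-1}(C\overset{d}{\ast}C')[j-i,k-i]\,(\eta_r\overset{d}{\ast}\eta'_s)(k). \]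
   Context: For a prime power $Q=\ell^m$ ($\ell$ prime) with $Q\equiv1\pmod e$, write $Q=ef+1$, let $\zeta_\ell=e^{2\pi i/\ell}$, $\mathrm{Tr}:\mathbb{F}_Q\to\mathbb{F}_\ell$ the trace, $\beta$ a generator of $\mathbb{F}_Q^\times$. Gaussian periods: $\eta(i)=\sum_{j=0}^{f-1}\zeta_\ell^{\mathrm{Tr}(\beta^{ej+i})}$. Cyclotomic numbers: $\mathrm{Cyc}(i,j)=\#\{(v_1,v_2):0\le v_1,v_2\le f-1,\ 1+\beta^{ev_1+i}=\beta^{ev_2+j}\}$. Let $D_i=1$ if $-1\in\beta^i(\mathbb{F}_Q^\times)^e$ and $0$ otherwise. The multiplication matrix is $[\mathrm{Cyc}(i,j)-D_if]_{0\le i,j\le e-1}$, with indices modulo $e$ and $M[i,j]$ denoting the $(i,j)$ entry. For functions $f,g$ on $\mathbb{Z}/e\mathbb{Z}$, $(f\overset{d}{\ast}g)(i)=\sum_{s=0}^{e-1}f(s)g(ds+i)$; for matrices, $A\overset{d}{\ast}B=\big[\sum_{s,t=0}^{e-1}a_{s,t}b_{ds+i,dt+j}\big]_{0\le i,j\le e-1}$. *)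

(* Defs.v *)
From mathcomp Require Import all_boot all_order all_algebra all_field.
Set Implicit Arguments. Unset Strict Implicit. Unset Printing Implicit Defensive.
Import GRing.Theory Num.Theory.
Local Open Scope ring_scope.

(* zeta_l = e^{2 pi i / l}: the l-th root of -1 with minimal non-negative
   argument is e^{i pi / l}; its square is e^{2 pi i / l}. *)
Definition zeta (l : nat) : algC := (l.-root (-1)) ^+ 2.

Section Gauss.
Variables (F : finFieldType) (l m : nat).

Definition trF (x : F) : F := \sum_(k < m) x ^+ (l ^ k).

(* the trace read as an element of {0,..,l-1} = F_l *)
Definition trnat (x : F) : nat :=
  odflt 0%N (omap (@nat_of_ord l) [pick k : 'I_l | (k%:R : F) == trF x]).

Variables (e : nat) (beta : F).

Definition ff : nat := ((#|F| - 1) %/ e)%N.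

Definition eta (i : nat) : algC :=
  \sum_(j < ff) zeta l ^+ trnat (beta ^+ (e * j + i %% e)%N).

Definition Cyc (i j : nat) : nat :=
  #|[set v : 'I_ff * 'I_ff |
      1 + beta ^+ (e * v.1 + i %% e)%N == beta ^+ (e * v.2 + j %% e)%N]|.

Definition Dsgn (i : nat) : nat :=
  [exists v : 'I_ff, - 1 == beta ^+ (e * v + i %% e)%N].

Definition multmx (i j : nat) : algC := (Cyc i j)%:R - (Dsgn i * ff)%:R.

End Gauss.

(* (f *d g)(i) = sum_{s<e} f(s) g(d s + i)  (functions on Z/eZ, read via nat mod e) *)
Definition dconv (e d : nat) (f g : nat -> algC) (i : nat) : algC :=
  \sum_(s < e) f s * g (d * s + i)%N.

Definition dconvmx (e d : nat) (A B : nat -> nat -> algC) (i j : nat) : algC :=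
  \sum_(s < e) \sum_(t < e) A s t * B (d * s + i)%N (d * t + j)%N.

(* Main.v *)
Require Import Defs.
From mathcomp Require Import all_boot all_order all_algebra all_field.
From mathcomp Require Import zify.
Import Order.TTheory GRing.Theory Num.Theory.
Local Open Scope ring_scope.
Set Implicit Arguments. Unset Strict Implicit. Unset Printing Implicit Defensive.

Lemma psum (e : nat) (G : nat -> algC) (c : nat) :
  (forall n, G (n %% e)%N = G n) -> \sum_(k < e) G (k + c)%N = \sum_(k < e) G k.
Proof.
move=> HG; elim: c => [|c IH]; first by apply: eq_bigr => k _; rewrite addn0.
case: e HG IH => [|e] HG IH; first by rewrite !big_ord0.
rewrite -IH big_ord_recr big_ord_recl /= addrC; congr (_ + _).
  rewrite -HG -[in RHS]HG; congr G.
  by rewrite addnS -addSn modnDl.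
by apply: eq_bigr => k _; rewrite addnS addSn.
Qed.

Section Conv.
Variables (e d : nat) (h1 h2 : nat -> algC) (M1 M2 : nat -> nat -> algC).
Hypothesis e_gt0 : (0 < e)%N.
Hypothesis h1P : forall a, h1 (a %% e)%N = h1 a.
Hypothesis h2P : forall a, h2 (a %% e)%N = h2 a.
Hypothesis M2P1 : forall a b, M2 (a %% e)%N b = M2 a b.
Hypothesis M2P2 : forall a b, M2 a (b %% e)%N = M2 a b.
Hypothesis PF1 : forall a c, h1 a * h1 (a + c)%N = \sum_(k < e) M1 c k * h1 (a + k)%N.
Hypothesis PF2 : forall a c, h2 a * h2 (a + c)%N = \sum_(k < e) M2 c k * h2 (a + k)%N.

Let E := dconv e d h1 h2.
Let DM := dconvmx e d M1 M2.

Lemma modP (G : nat -> algC) (x y : nat) : (forall a, G (a %% e)%N = G a) ->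
  (x %% e = y %% e)%N -> G x = G y.
Proof. by move=> HG H; rewrite -HG H HG. Qed.

Lemma EP a : E (a %% e)%N = E a.
Proof.
apply: eq_bigr => s _; congr (_ * _); apply: modP => //.
by rewrite -modnDmr modn_mod modnDmr.
Qed.

Lemma DMP a b : DM a (b %% e)%N = DM a b.
Proof.
apply: eq_bigr => s _; apply: eq_bigr => t _; congr (_ * _).
rewrite -M2P2 -[RHS]M2P2; congr M2.
by rewrite -modnDmr modn_mod modnDmr.
Qed.

Lemma keyE i c : E i * E (i + c)%N = \sum_(k < e) DM c k * E (k + i)%N.
Proof.
rewrite /E /dconv mulr_suml.
under eq_bigr => s _.
  rewrite mulr_sumr.
  rewrite -(@psum e (fun t => h1 s * h2 (d * s + i)%N * (h1 t * h2 (d * t + (i + c))%N)) s); last first.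
    move=> n; congr (_ * (_ * _)); first by rewrite h1P.
    apply: modP => //; by rewrite -modnDml modnMmr modnDml.
  under eq_bigr => a _.
    rewrite mulrACA addnC PF1 (_ : (d * (s + a) + (i + c) = (d * s + i) + (d * a + c))%N); last by lia.
    rewrite PF2 mulr_suml.
    under eq_bigr => b _.
      rewrite mulr_sumr -(@psum e (fun m => M1 a b * h1 (s + b)%N * (M2 (d * a + c)%N m * h2 (d * s + i + m)%N)) (d * b)); last first.
        move=> n; rewrite M2P2; congr (_ * (_ * _)).
        apply: modP => //; by rewrite -modnDmr modn_mod modnDmr.
      over.
    over.
  over.
rewrite /DM /dconvmx.
under [RHS]eq_bigr => k _.
  rewrite mulr_suml.
  under eq_bigr => a _.
    rewrite mulr_suml.
    under eq_bigr => b _.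
      rewrite mulr_sumr -(@psum e (fun s => M1 a b * M2 (d * a + c)%N (d * b + k)%N * (h1 s * h2 (d * s + (k + i))%N)) b); last first.
        move=> n; congr (_ * (_ * _)); first by rewrite h1P.
        apply: modP => //; by rewrite -modnDml modnMmr modnDml.
      over.
    over.
  over.
simpl.
(* Now reorder sums: LHS s a b k ; RHS k a b s *)
rewrite exchange_big /=.
under eq_bigr => a _.
  rewrite exchange_big /=.
  under eq_bigr => b _. rewrite exchange_big /=. over.
  over.
rewrite [RHS]exchange_big /=.
apply: eq_bigr => a _.
rewrite [RHS]exchange_big /=.
apply: eq_bigr => b _.
apply: eq_bigr => k _.
apply: eq_bigr => s _.
rewrite (_ : (d * (s + b) + (k + i) = d * s + i + (k + d * b))%N); last by lia.
by rewrite [(d * b + k)%N]addnC mulrACA.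
Qed.


Lemma conv_main (i j : 'I_e) :
  E i * E j = \sum_(k < e) DM ((j + e - i) %% e)%N ((k + e - i) %% e)%N * E k.
Proof.
have lie : (i <= e)%N by apply: ltnW.
have -> : E j = E (i + (j + e - i) %% e)%N.
  rewrite -EP -[RHS]EP; congr E.
  rewrite modnDmr (_ : (i + (j + e - i) = j + e)%N); last by lia.
  by rewrite modnDr.
rewrite keyE.
rewrite -(@psum e (fun k => DM ((j + e - i) %% e)%N ((k + e - i) %% e)%N * E k) i); last first.
  move=> n; congr (_ * _); last by rewrite EP.
  rewrite -DMP -[RHS]DMP; congr DM.
  rewrite !modn_mod (_ : (n %% e + e - i = n %% e + (e - i))%N); last by lia.
  rewrite (_ : (n + e - i = n + (e - i))%N); last by lia.
  by rewrite modnDml.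
apply: eq_bigr => k _; congr (_ * _).
rewrite -DMP; congr DM.
by rewrite (_ : (k + i + e - i = k + e)%N) ?modnDr //; lia.
Qed.
End Conv.

Section Char.
Variables (F : finFieldType) (p r : nat).
Hypotheses (hp : prime p) (hr : (0 < r)%N) (HF : #|F| = (p ^ r)%N).

Let chF : p \in [pchar F] := card_finPcharP HF hp.

Lemma natr_eq_mod a b : ((a%:R : F) == b%:R) = (a == b %[mod p])%N.
Proof.
wlog le_ba : a b / (b <= a)%N.
  move=> W; case: (leqP b a) => h; first exact: W.
  by rewrite eq_sym W ?(ltnW h) // eq_sym.
by rewrite eqn_mod_dvd // (dvdn_pcharf chF) natrB // subr_eq0.
Qed.

Lemma inFp (y : F) : y ^+ p = y -> exists k : 'I_p, k%:R = y.
Proof.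
move=> yp.
have p_gt0 := prime_gt0 hp.
have [->|y0] := eqVneq y 0; first by exists (Ordinal p_gt0).
have yp1 : y ^+ p.-1 = 1.
  apply: (mulfI y0); rewrite mulr1 -exprS prednK //.
pose rs := [seq (k.+1)%:R : F | k <- iota 0 p.-1].
have Hall : all p.-1.-unity_root rs.
  apply/allP => _ /mapP[k kin ->].
  have nz : (k.+1)%:R != 0 :> F.
    rewrite -(dvdn_pcharf chF) gtnNdvd //.
    move: kin; rewrite mem_iota add0n => /andP[_ h]; lia.
  rewrite unity_rootE; apply/eqP; apply: (mulfI nz); rewrite mulr1 -exprS prednK //.
  by rewrite -(pFrobenius_autE chF) pFrobenius_aut_nat.
have Hu : uniq rs.
  rewrite map_inj_in_uniq ?iota_uniq // => a b.
  rewrite !mem_iota !add0n => /andP[_ ha] /andP[_ hb] /eqP.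
  rewrite natr_eq_mod !modn_small; [by move/eqP => [] | lia | lia].
have p1 : (0 < p.-1)%N by have := prime_gt1 hp; lia.
have := mem_unity_roots p1 Hall Hu.
rewrite size_map size_iota => /(_ erefl y).
have : y \in (p.-1).-unity_root by rewrite -topredE /= unity_rootE yp1.
move=> + E; rewrite E => /mapP[k kin ->].
have kp : (k.+1 < p)%N by move: kin; rewrite mem_iota add0n => /andP[_ h]; lia.
by exists (Ordinal kp).
Qed.

Lemma trFD x y : @trF F p r (x + y) = @trF F p r x + @trF F p r y.
Proof.
rewrite /trF -big_split /=; apply: eq_bigr => k _.
apply: exprDn_pchar.
by rewrite (eq_pnat _ (pcharf_eq chF)) pnatX pnat_id.
Qed.

Lemma trF_p x : @trF F p r x ^+ p = @trF F p r x.
Proof.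
rewrite -(pFrobenius_autE chF) rmorph_sum /=.
under eq_bigr => k _ do rewrite pFrobenius_autE -exprM -expnSr.
case: r hr HF => // r' _ HF'.
rewrite /trF big_ord_recr [RHS]big_ord_recl /= expn0 expr1 -HF' expf_card addrC.
by congr (_ + _); apply: eq_bigr => k _.
Qed.

Lemma trnatE x : (@trnat F p r x)%:R = @trF F p r x /\ (@trnat F p r x < p)%N.
Proof.
rewrite /trnat; case: pickP => [k /eqP -> | none] /=; first by [].
have [k Hk] := inFp (trF_p x).
by have := none k; rewrite Hk eqxx.
Qed.

Lemma trF_nz : exists y, @trF F p r y != 0.
Proof.
case: (boolP [exists y, @trF F p r y != 0]) => [/existsP // | nE]; exfalso.
have H y : ~~ (@trF F p r y != 0) by apply/negP => hy; move/negP: nE; apply; apply/existsP; exists y.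
have p1 : (1 < p)%N := prime_gt1 hp.
case: r hr HF H => // r' _ HF' H.
pose P : {poly F} := \sum_(k < r'.+1) 'X^(p ^ k).
have P0 : P != 0.
  apply/eqP => /(congr1 (fun q : {poly F} => q`_(p ^ r'))).
  rewrite coef0 coef_sum big_ord_recr /= coefXn eqxx big1 ?add0r; first by move/eqP; rewrite oner_eq0.
  move=> k _; rewrite coefXn eqn_exp2l //.
  by rewrite eq_sym (ltn_eqF (ltn_ord k)).
have Hroots : all (root P) (enum F).
  apply/allP => y _; rewrite rootE horner_sum.
  under eq_bigr => k _ do rewrite hornerXn.
  by have := H y; rewrite negbK.
have := max_poly_roots P0 Hroots (enum_uniq _).
rewrite -cardE HF'.
have sz : (size P <= (p ^ r').+1)%N.
  apply: leq_trans (size_sum _ _ _) _.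
  apply/bigmax_leqP => k _; rewrite size_polyXn ltnS leq_pexp2l ?prime_gt0 //.
  by rewrite -ltnS.
move=> lt; have := leq_trans lt sz; rewrite ltnS leqNgt ltn_exp2l //.
by rewrite ltnSn.
Qed.
End Char.

Lemma one_neq_m1 : (1 : algC) != -1.
Proof. by rewrite eq_sym lt_eqF // (lt_trans (ltrN10 _) ltr01). Qed.

Lemma zeta_prim p : prime p -> p.-primitive_root (zeta p).
Proof.
move=> hp; have p0 := prime_gt0 hp; have p1 := prime_gt1 hp.
rewrite /zeta; set w := p.-root (-1).
have wp : w ^+ p = -1 by rewrite /w rootCK.
have zp : (w ^+ 2) ^+ p = 1 by rewrite exprAC wp sqrrN expr1n.
have [m pm mp] := prim_order_exists p0 zp.
have /primeP [_ m1] := hp.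
have /orP [/eqP mE| /eqP mE] := m1 m mp; last by rewrite -mE.
exfalso; rewrite mE in pm.
have z1 : w ^+ 2 = 1 by have := prim_expr_order pm; rewrite expr1.
have /eqP := z1; rewrite sqrf_eq1 => /orP[/eqP w1|/eqP wm1].
  by move: wp; rewrite w1 expr1n => /eqP; rewrite (negbTE one_neq_m1).
have [p2|p2] := eqVneq p 2%N.
  by move: wp; rewrite wm1 p2 sqrrN expr1n => /eqP; rewrite (negbTE one_neq_m1).
have podd : odd p.
  by case: (even_prime hp) => // p2'; rewrite p2' eqxx in p2.
have [z zprim] := C_prim_root_exists p0.
pose y0 := - z.
have y0p : y0 ^+ p = -1.
  by rewrite /y0 exprNn (prim_expr_order zprim) mulr1 -signr_odd podd expr1.
have y0n : y0 != -1.
  rewrite /y0 eqr_opp; apply/eqP => z1'.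
  by have := eq_prim_root_expr zprim 1 0; rewrite !expr0 expr1 z1' eqxx modn_small // mod0n.
have [y [yp yIm yn]] : exists y : algC, [/\ y ^+ p = -1, 0 <= 'Im y & y != -1].
  case: (boolP (0 <= 'Im y0)) => h; first by exists y0.
  exists y0^*; split.
  - by rewrite -rmorphXn y0p rmorphN1.
  - rewrite Im_conj oppr_ge0; have := Creal_Im y0.
    by move=> /real_leVge /(_ (real0 _)); rewrite (negbTE h) orbF.
  - apply: contraNN y0n => /eqP h'; apply/eqP.
    by rewrite -[y0]conjCK h' rmorphN1.
have Rle : 'Re y <= 'Re w := rootC_Re_max p0 yp yIm.
have Re1 : 'Re (1:algC) = 1 by apply/Creal_ReP; rewrite rpred1.
rewrite wm1 raddfN /= Re1 in Rle.
have ny : `|y| = 1.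
  apply/eqP; rewrite -(@pexpr_eq1 _ _ p) // -normrX yp normrN normr1 //.
have := leif_Re_Creal (- y).
rewrite raddfN /= normrN ny => -[le1 eqiff].
move: eqiff; have -> : (- 'Re y == 1) = true.
  by rewrite eq_le le1 /= lerNr.
move/esym => /ger0_norm; rewrite normrN ny => /esym /eqP.
by rewrite eqr_oppLR (negbTE yn).
Qed.

Lemma psum_loc (e : nat) (G : nat -> algC) (c : nat) :
  (forall n, G (n %% e)%N = G n) -> \sum_(k < e) G (k + c)%N = \sum_(k < e) G k.
Proof.
move=> HG; elim: c => [|c IH]; first by apply: eq_bigr => k _; rewrite addn0.
case: e HG IH => [|e] HG IH; first by rewrite !big_ord0.
rewrite -IH big_ord_recr big_ord_recl /= addrC; congr (_ + _).
  rewrite -HG -[in RHS]HG; congr G.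
  by rewrite addnS -addSn modnDl.
by apply: eq_bigr => k _; rewrite addnS addSn.
Qed.

Section Period.
Variables (F : finFieldType) (p r e : nat) (beta : F).
Hypotheses (hp : prime p) (hr : (0 < r)%N) (HF : #|F| = (p ^ r)%N)
  (He : (p ^ r = 1 %[mod e])%N) (hb : (#|F|.-1).-primitive_root beta) (e_gt0 : (0 < e)%N).

Let N := #|F|.-1.
Let f := ff F e.

Lemma N_gt0 : (0 < N)%N.
Proof. rewrite /N HF; have := prime_gt1 hp; have := leq_pexp2l (prime_gt0 hp) hr; lia. Qed.

Lemma Nef : N = (e * f)%N.
Proof.
rewrite /f /ff subn1 -/N mulnC divnK //.
have h1 : (1 <= p ^ r)%N by rewrite expn_gt0 prime_gt0.
by move/eqP: He; rewrite eqn_mod_dvd // subn1 /N HF.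
Qed.

Let psi (x : F) := zeta p ^+ @trnat F p r x.

Lemma zp : zeta p ^+ p = 1.
Proof. exact: prim_expr_order (zeta_prim hp). Qed.

Lemma psi_eq a b : (a == b %[mod p])%N -> zeta p ^+ a = zeta p ^+ b.
Proof. by move/eqP => h; rewrite -(expr_mod _ zp) h (expr_mod _ zp). Qed.

Lemma psiD x y : psi (x + y) = psi x * psi y.
Proof.
rewrite /psi -exprD; apply: psi_eq.
rewrite -(natr_eq_mod hp HF) natrD.
have [-> _] := trnatE hp hr HF (x + y).
have [-> _] := trnatE hp hr HF x.
have [-> _] := trnatE hp hr HF y.
by rewrite (trFD hp HF).
Qed.

Lemma psi0 : psi 0 = 1.
Proof.
rewrite /psi -(expr0 (zeta p)); apply: psi_eq.
rewrite -(natr_eq_mod hp HF).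
have [-> _] := trnatE hp hr HF 0.
have := trFD hp HF 0 0; rewrite addr0 => /eqP; rewrite -subr_eq0 opprD addrA subrr add0r oppr_eq0.
by move/eqP => ->.
Qed.

Lemma psi_sum : \sum_x psi x = 0.
Proof.
have [y0 hy0] := trF_nz hp hr HF.
have py : psi y0 != 1.
  rewrite /psi -(expr0 (zeta p)) (eq_prim_root_expr (zeta_prim hp)).
  rewrite -(natr_eq_mod hp HF).
  by have [-> _] := trnatE hp hr HF y0.
have : \sum_x psi x = psi y0 * \sum_x psi x.
  rewrite {1}(reindex_inj (addIr y0)) mulr_sumr; apply: eq_bigr => x _.
  by rewrite psiD mulrC.
move/eqP; rewrite -subr_eq0 -{1}(mul1r (\sum_x psi x)) -mulrBl mulf_eq0 subr_eq0.
by rewrite eq_sym (negbTE py) => /eqP.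
Qed.


Definition C (a : nat) : {set F} := [set beta ^+ (e * j + a %% e)%N | j : 'I_f].

Lemma expo_lt (j : 'I_f) b : (b < e)%N -> (e * j + b < N)%N.
Proof.
move=> hb'; rewrite Nef; apply: (@leq_trans (e * j.+1)).
  by rewrite mulnS addnC ltn_add2r.
by rewrite leq_mul2l ltn_ord orbT.
Qed.

Lemma beta_eq m n : (beta ^+ m == beta ^+ n) = (m == n %[mod N])%N.
Proof. exact: eq_prim_root_expr. Qed.

Lemma g_inj a : injective (fun j : 'I_f => beta ^+ (e * j + a %% e)%N).
Proof.
move=> j1 j2 /eqP; rewrite beta_eq.
rewrite (modn_small (expo_lt _ (ltn_pmod a e_gt0))) (modn_small (expo_lt _ (ltn_pmod a e_gt0))).
rewrite eqn_add2r eqn_mul2l eqn0Ngt e_gt0 /= => /eqP h.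
exact: val_inj h.
Qed.

Lemma beta_modN n : beta ^+ n = beta ^+ (n %% N).
Proof. by rewrite (expr_mod _ (prim_expr_order hb)). Qed.

Lemma e_dvd_N : (e %| N)%N.
Proof. by rewrite Nef dvdn_mulr. Qed.

Lemma memC a n : (n %% e = a %% e)%N -> beta ^+ n \in C a.
Proof.
move=> hn; apply/imsetP.
have nN : (n %% N < N)%N := ltn_pmod n N_gt0.
have jf : ((n %% N) %/ e < f)%N.
  by rewrite ltn_divLR // mulnC -Nef.
exists (Ordinal jf) => //=.
rewrite beta_modN; congr (beta ^+ _).
rewrite {1}(divn_eq (n %% N) e) mulnC; congr (_ + _)%N.
by rewrite -hn (modn_dvdm _ e_dvd_N).
Qed.

Lemma Cmem a x : x \in C a -> exists n, x = beta ^+ n /\ (n %% e = a %% e)%N.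
Proof.
case/imsetP => j _ ->; exists (e * j + a %% e)%N; split => //.
by rewrite mulnC modnMDl modn_mod.
Qed.

Lemma C_mod a : C (a %% e) = C a.
Proof. by rewrite /C modn_mod. Qed.

Lemma beta_neq0 : beta != 0.
Proof.
apply/eqP => b0; have := prim_expr_order hb; rewrite b0 expr0n -/N.
by rewrite (negbTE (lt0n_neq0 N_gt0)) => /eqP; rewrite eq_sym oner_eq0.
Qed.

Lemma C_nz a x : x \in C a -> x != 0.
Proof. by case/Cmem => n [-> _]; rewrite expf_neq0 // beta_neq0. Qed.

Lemma CM a b x y : x \in C a -> y \in C b -> x * y \in C (a + b).
Proof.
case/Cmem => n [-> hn]; case/Cmem => m [-> hm].
by rewrite -exprD; apply: memC; rewrite -modnDm hn hm modnDm.
Qed.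

Lemma CV i w c y : c \in C w -> y \in C (i + w) -> y / c \in C i.
Proof.
case/Cmem => m [-> hm]; case/Cmem => n [-> hn].
have cz : beta ^+ m * beta ^+ (m * N.-1) = 1.
  rewrite -exprD (_ : (m + m * N.-1 = m * N)%N); last first.
    by have := N_gt0; case: (N) => // N' _ /=; rewrite mulnS.
  by rewrite mulnC exprM /N (prim_expr_order hb) expr1n.
have -> : (beta ^+ m)^-1 = beta ^+ (m * N.-1).
  by rewrite -[RHS](mulKf (expf_neq0 m beta_neq0)) cz mulr1.
rewrite -exprD; apply: memC.
apply/eqP; rewrite -(eqn_modDr m).
have -> : (n + m * N.-1 + m = n + m * N)%N.
  by have := N_gt0; case: (N) => // N' _ /=; rewrite mulnS; lia.
rewrite Nef mulnCA mulnC addnC modnMDl hn.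
by rewrite -[((i + m) %% e)%N]modnDmr hm modnDmr.
Qed.

Lemma shiftC (phi : F -> algC) i w c : c \in C w ->
  \sum_(x in C i) phi (x * c) = \sum_(y in C (i + w)) phi y.
Proof.
move=> hc.
have -> : C (i + w) = [set x * c | x in C i].
  apply/setP => y; apply/idP/imsetP => [hy | [x hx ->]]; last exact: CM.
  exists (y / c); first exact: CV hc hy.
  by rewrite divfK // (C_nz hc).
rewrite [RHS]big_imset //= => x1 x2 _ _; apply: mulIf; exact: C_nz hc.
Qed.


Lemma sum_in (A : {set F}) (phi : F -> algC) :
  \sum_(x in A) phi x = \sum_x (x \in A)%:R * phi x.
Proof.
rewrite big_mkcond /=; apply: eq_bigr => x _.
by case: (x \in A); rewrite ?mul1r ?mul0r.
Qed.

Lemma eta_set a : eta p r e beta a = \sum_(x in C a) psi x.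
Proof.
rewrite /C big_imset /=; last by move=> j1 j2 _ _; apply: g_inj.
by apply: eq_bigl => j.
Qed.

Lemma card_C a : #|C a| = f.
Proof. by rewrite card_imset ?card_ord //; apply: g_inj. Qed.

Lemma card_sum (A : {set F}) (P : pred F) :
  (#|[set z in A | P z]|)%:R = \sum_(z in A) (P z)%:R :> algC.
Proof.
rewrite -sumr_const sum_in [RHS]sum_in; apply: eq_bigr => z _.
by rewrite inE mulr1 -natrM mulnb.
Qed.

Lemma Cyc_set a b :
  (Cyc e beta a b)%:R = \sum_(z in C a) (1 + z \in C b)%:R :> algC.
Proof.
rewrite -card_sum /Cyc.
set S := [set v : 'I_f * 'I_f | _].
rewrite -(@card_in_imset _ _ (fun v : 'I_f * 'I_f => beta ^+ (e * v.1 + a %% e)%N) S); last first.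
  move=> [u1 u2] [v1 v2]; rewrite !inE /= => /eqP h1 /eqP h2 h.
  have e1 : u1 = v1 := @g_inj a u1 v1 h; subst v1; rewrite h1 in h2.
  by rewrite (@g_inj b u2 v2 h2).
suff -> : [set beta ^+ (e * v.1 + a %% e)%N | v : 'I_f * 'I_f in S] = [set z in C a | 1 + z \in C b] by [].
apply/setP => z; rewrite inE.
apply/imsetP/andP => [[[v1 v2]] /[!inE] /= /eqP h -> | [hz hz1]].
  split; first by apply/imsetP; exists v1.
  by rewrite h; apply/imsetP; exists v2.
case/imsetP: hz => v1 _ zE; case/imsetP: hz1 => v2 _ zE1.
by exists (v1, v2); rewrite // inE /= -zE zE1.
Qed.

Lemma Dsgn_set a :
  (Dsgn e beta a)%:R = \sum_(z in C a) (1 + z == 0)%:R :> algC.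
Proof.
rewrite sum_in (bigD1 (-1)) //= addrC subrr eqxx mulr1 big1 ?add0r; last first.
  by move=> z hz; rewrite addrC addr_eq0 (negbTE hz) mulr0.
congr (_ %:R); rewrite /Dsgn; congr (nat_of_bool _).
apply/idP/idP => [/existsP [v /eqP hv] | /imsetP [v _ hv]].
  by apply/imsetP; exists v.
by apply/existsP; exists v; apply/eqP.
Qed.

Lemma C_ex x : x != 0 -> exists a : 'I_e, x \in C a.
Proof.
move=> x0.
have xN : x ^+ N = 1.
  apply: (mulfI x0); rewrite mulr1 -exprS /N prednK ?expf_card //.
  by rewrite HF expn_gt0 prime_gt0.
have [i ->] := prim_rootP hb xN.
exists (Ordinal (ltn_pmod i e_gt0)); apply: memC => /=.
by rewrite modn_mod.
Qed.

Lemma C_uniq a b x : x \in C a -> x \in C b -> (a %% e = b %% e)%N.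
Proof.
case/Cmem => n [-> hn]; case/Cmem => m [/eqP hm hm'].
rewrite beta_eq in hm.
by rewrite -hn -hm' -(modn_dvdm n e_dvd_N) (eqP hm) (modn_dvdm m e_dvd_N).
Qed.

Lemma ind_sum x (G : nat -> algC) : x != 0 ->
  exists a0 : 'I_e, x \in C a0 /\ \sum_(k < e) (x \in C k)%:R * G k = G a0.
Proof.
move=> x0; have [a0 ha0] := C_ex x0; exists a0; split => //.
rewrite (bigD1 a0) //= ha0 mul1r big1 ?addr0 // => k hk.
case: (boolP (x \in C k)) => hx; last by rewrite mul0r.
have := C_uniq hx ha0; rewrite !modn_small ?ltn_ord // => hk'.
by move: hk; rewrite -val_eqE /= hk' eqxx.
Qed.

Lemma sum_eta : \sum_(k < e) eta p r e beta k = -1.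
Proof.
under eq_bigr => k _ do rewrite eta_set sum_in.
rewrite exchange_big /=.
rewrite (bigD1 0) //= big1 ?add0r; last first.
  move=> k _; case: (boolP (0 \in C k)) => h; last by rewrite mul0r.
  by have := C_nz h; rewrite eqxx.
have : \sum_x psi x = 0 := psi_sum.
rewrite (bigD1 0) //= psi0 => /eqP; rewrite addrC addr_eq0 => /eqP <-.
apply: eq_bigr => x x0.
have [a0 [_ ->]] := ind_sum (fun _ => psi x) x0.
by [].
Qed.


Lemma etaP a : eta p r e beta (a %% e)%N = eta p r e beta a.
Proof. by rewrite /eta modn_mod. Qed.

Lemma T_eq a z :
  \sum_(x in C a) psi (x * (1 + z)) =
  (1 + z == 0)%:R * f%:R + \sum_(k < e) (1 + z \in C k)%:R * eta p r e beta (a + k).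
Proof.
case: (boolP (1 + z == 0)) => hz.
  have Z : \sum_(k < e) (0 \in C k)%:R * eta p r e beta (a + k) = 0.
    apply: big1 => k _; case: (boolP (0 \in C k)) => h; last by rewrite mul0r.
    by have := C_nz h; rewrite eqxx.
  rewrite (eqP hz) mul1r Z addr0.
  under eq_bigr => x _ do rewrite mulr0 psi0.
  by rewrite sumr_const card_C.
rewrite mul0r add0r.
have [a0 [ha0 ->]] := ind_sum (fun k => eta p r e beta (a + k)) hz.
by rewrite eta_set (shiftC _ _ ha0).
Qed.

Lemma PF a c : eta p r e beta a * eta p r e beta (a + c)%N =
  \sum_(k < e) multmx e beta c k * eta p r e beta (a + k)%N.
Proof.
rewrite [eta _ _ _ _ a]eta_set mulr_suml.
under eq_bigr => x hx.
  rewrite eta_set addnC -(shiftC _ _ hx) mulr_sumr.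
  under eq_bigr => z _ do rewrite -psiD [z * x]mulrC -{1}[x]mulr1 -mulrDr.
  over.
rewrite /= exchange_big /=.
under eq_bigr => z _ do rewrite T_eq.
rewrite big_split /= -mulr_suml -Dsgn_set.
rewrite exchange_big /=.
under eq_bigr => k _ do rewrite -mulr_suml -Cyc_set.
rewrite /multmx.
under [RHS]eq_bigr => k _ do rewrite mulrBl.
rewrite sumrB -mulr_sumr.
have -> : \sum_(i < e) eta p r e beta (a + i) = -1.
  under eq_bigr => i _ do rewrite addnC.
  rewrite (@psum_loc e (fun k => eta p r e beta k) a) ?sum_eta //.
  by move=> n; rewrite etaP.
by rewrite /f natrM mulrN1 opprK addrC.
Qed.

End Period.

Theorem mainTheorem8 (e : nat) (he : (2 <= e)%N)
  (F1 : finFieldType) (p r : nat) (beta1 : F1)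
  (F2 : finFieldType) (q s : nat) (beta2 : F2) :
  prime p -> (0 < r)%N -> #|F1| = (p ^ r)%N -> (p ^ r = 1 %[mod e])%N ->
  (#|F1|.-1).-primitive_root beta1 ->
  prime q -> (0 < s)%N -> #|F2| = (q ^ s)%N -> (q ^ s = 1 %[mod e])%N ->
  (#|F2|.-1).-primitive_root beta2 ->
  forall (d i j : 'I_e), (d : nat) != 0%N ->
  let E := dconv e d (eta p r e beta1) (eta q s e beta2) in
  E i * E j =
  \sum_(k < e)
     dconvmx e d (multmx e beta1) (multmx e beta2)
             ((j + e - i) %% e)%N ((k + e - i) %% e)%N * E k.
Proof.
move=> hp hr HF He hb hq hs HF2 He2 hb2 d i j _ E.
have e0 : (0 < e)%N by apply: leq_trans he.
apply: (@conv_main e d (eta p r e beta1) (eta q s e beta2) (multmx e beta1) (multmx e beta2)).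
- exact: e0.
- by move=> a; rewrite /eta modn_mod.
- by move=> a; rewrite /eta modn_mod.
- by move=> a b; rewrite /multmx /Cyc /Dsgn !modn_mod.
- exact: (PF hp hr HF He hb e0).
- exact: (PF hq hs HF2 He2 hb2 e0).
Qed.
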